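(* Let $(X,u)$ be a Čech closure space and $Y$ a topological space, let $Y^X$ be the set of all continuous maps $(X,u)\to Y$, let $(f_\lambda)_{\lambda\in\Lambda}$ be a net in $Y^X$ and $f\in Y^X$. Then $(f_\lambda)$ converges continuously to $f$ if and only if $$\overline{\lim_{\Lambda}}\, f_\lambda^{-1}(B)\subset f^{-1}(B)\quad\text{for every closed subset } B\subset Y.$$
   Context: A Čech closure space $(X,u)$ is a set $X$ with an operator $u:\mathcal P(X)\to\mathcal P(X)$ satisfying $u(\emptyset)=\emptyset$, $A\subset u(A)$, and $u(A\cup B)=u(A)\cup u(B)$. The interior is $\mathrm{int}_u A=X\setminus u(X\setminus A)$; $U$ is a neighbourhood of $x$ if $x\in\mathrm{int}_uU$. A topological space is regarded as a closure space with its (Kuratowski) closure operator. A map $f:(X,u)\to(Y,v)$ is continuous if $f(u(A))\subset v(f(A))$ for all $A\subset X$. A net $(x_\mu)$ converges to $x$ if it is eventually in every neighbourhood of $x$. A net $(f_\lambda)_{\lambda\in\Lambda}$ in $Y^X$ converges continuously to $f\in Y^X$ if, whenever a net $(x_\mu)_{\mu\in M}$ converges to $x$ in $(X,u)$, the net $(f_\lambda(x_\mu))_{(\lambda,\mu)\in\Lambda\times M}$ (coordinatewise order) converges to $f(x)$ in $Y$. For a net $(A_\lambda)_{\lambda\in\Lambda}$ of subsets of $X$, its upper limit $\overline{\lim_{\Lambda}}A_\lambda$ is the set of all $x\in X$ such that for every $\lambda_0\in\Lambda$ and every neighbourhood $U$ of $x$ there is $\lambda\ge\lambda_0$ with $A_\lambda\cap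 U\ne\emptyset$. *)

(* Defs.v *)
From mathcomp Require Import all_boot all_order.
From mathcomp Require Import boolp classical_sets topology.
Set Implicit Arguments. Unset Strict Implicit. Unset Printing Implicit Defensive.
Local Open Scope classical_set_scope.

Definition is_cech_closure {X : Type} (u : set X -> set X) : Prop :=
  [/\ u set0 = set0, (forall A, A `<=` u A) & (forall A B, u (A `|` B) = u A `|` u B)].

Definition cint {X : Type} (u : set X -> set X) (A : set X) : set X := ~` u (~` A).
Definition cnbhd {X : Type} (u : set X -> set X) (x : X) (U : set X) : Prop := cint u U x.

Definition ccontinuous {X : Type} (u : set X -> set X) {Y : topologicalType}
  (f : X -> Y) : Prop := forall A, f @` (u A) `<=` closure (f @` A).

Definition directed {I : Type} (le : I -> I -> Prop) : Prop :=
  [/\ (exists i : I, True), (forall i, le i i),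
      (forall i j k, le i j -> le j k -> le i k) &
      (forall i j, exists k, le i k /\ le j k)].

Definition prod_le {I J : Type} (leI : I -> I -> Prop) (leJ : J -> J -> Prop)
  (p q : I * J) : Prop := leI p.1 q.1 /\ leJ p.2 q.2.

Definition eventually_net {I : Type} (le : I -> I -> Prop) (P : I -> Prop) : Prop :=
  exists i0, forall i, le i0 i -> P i.

Definition cnet_cvg {X I : Type} (u : set X -> set X) (le : I -> I -> Prop)
  (x_ : I -> X) (x : X) : Prop :=
  forall U, cnbhd u x U -> eventually_net le (fun i => U (x_ i)).

Definition tnet_cvg {Y : topologicalType} {I : Type} (le : I -> I -> Prop)
  (y_ : I -> Y) (y : Y) : Prop :=
  forall U, nbhs y U -> eventually_net le (fun i => U (y_ i)).

Definition converges_continuously {X : Type} (u : set X -> set X)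
  {Y : topologicalType} {L : Type} (leL : L -> L -> Prop)
  (f_ : L -> X -> Y) (f : X -> Y) : Prop :=
  forall (M : Type) (leM : M -> M -> Prop), directed leM ->
  forall (x_ : M -> X) (x : X), cnet_cvg u leM x_ x ->
    tnet_cvg (prod_le leL leM) (fun p => f_ p.1 (x_ p.2)) (f x).

Definition upper_limit {X L : Type} (u : set X -> set X) (le : L -> L -> Prop)
  (A_ : L -> set X) : set X :=
  fun x => forall l0 U, cnbhd u x U -> exists l, le l0 l /\ (A_ l `&` U) !=set0.

(* Main.v *)
Require Import Defs.
From mathcomp Require Import all_boot all_order.
From mathcomp Require Import boolp classical_sets topology.
Local Open Scope classical_set_scope.

Theorem corollary1 (X : Type) (u : set X -> set X) (Hu : is_cech_closure u)
  (Y : topologicalType) (L : Type) (leL : L -> L -> Prop) (HL : directed leL)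
  (f_ : L -> X -> Y) (f : X -> Y)
  (Hf_ : forall l, ccontinuous u (f_ l)) (Hf : ccontinuous u f) :
  converges_continuously u leL f_ f <->
  (forall B : set Y, closed B ->
     upper_limit u leL (fun l => f_ l @^-1` B) `<=` f @^-1` B).
Proof.
have [u0 uext uU] := Hu.
have [[l00 _] Lrefl Ltrans Lub] := HL.
split.
- move=> H B cB x hx; apply: contrapT => nfx.
  pose N := {U : set X | cnbhd u x U}.
  pose M := (L * N)%type.
  pose leM (p q : M) := leL p.1 q.1 /\ proj1_sig q.2 `<=` proj1_sig p.2.
  have hc : forall p : M, exists q : L * X,
      leL p.1 q.1 /\ B (f_ q.1 q.2) /\ proj1_sig p.2 q.2.
    move=> [l0 [U nU]] /=.
    have [l [hl [y [hy hU]]]] := hx l0 U nU.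
    by exists (l, y).
  have [g hg] := choice hc.
  have nT : cnbhd u x setT.
    by rewrite /cnbhd /cint setCT u0.
  have nI : forall U V, cnbhd u x U -> cnbhd u x V -> cnbhd u x (U `&` V).
    move=> U V; rewrite /cnbhd /cint setCI uU => hU hV [] //.
  have dir : directed leM.
    split.
    + by exists (l00, exist _ setT nT).
    + by move=> i; split.
    + move=> i j k [h1 h2] [h3 h4]; split; first exact: Ltrans h3.
      by move=> z /h4 /h2.
    + move=> [i [U nU]] [j [V nV]].
      have [k [hk1 hk2]] := Lub i j.
      exists (k, exist _ (U `&` V) (nI _ _ nU nV)); split; split => //=;
        by move=> z [].
  pose x_ := fun p : M => (g p).2.
  have cx : cnet_cvg u leM x_ x.
    move=> U nU; exists (l00, exist _ U nU) => i [_ hi].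
    apply: hi; rewrite /x_; have [_ [_ ?]] := hg i; done.
  have nB : nbhs (f x) (~` B).
    apply: open_nbhs_nbhs; split => //; exact: closed_openC.
  have [[l1 m1] h] := H M leM dir x_ x cx _ nB.
  have [k [hk1 hk2]] := Lub l1 m1.1.
  pose p : M := (k, m1.2).
  have [hg1 [hg2 _]] := hg p.
  apply: (h ((g p).1, p)) => //.
  split => /=.
  + exact: Ltrans hk1 hg1.
  + by split.
- move=> H M leM _ x_ x cx V nV.
  apply: contrapT => nev.
  have cB : closed (~` interior V) := open_closedC (@open_interior _ V).
  suff ul : upper_limit u leL (fun l => f_ l @^-1` (~` interior V)) x.
    by apply: (H _ cB x ul).
  move=> l0 U nU.
  have [m0 hm0] := cx U nU.
  have : ~ (forall p, prod_le leL leM (l0, m0) p -> V (f_ p.1 (x_ p.2))).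
    by move=> hh; apply: nev; exists (l0, m0).
  move/not_forallP => /contrapT [p].
  move/not_implyP => [[hp1 hp2] hV].
  exists p.1; split => //.
  exists (x_ p.2); split; last exact: hm0.
  by move=> /interior_subset.
Qed.
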